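(* Let $m\in\mathbb{N}$ and $\beta\in(1,\frac{m+\sqrt{m^2+4}}{2})$. For every $x\in(0,\frac{m}{\beta-1})$ there exist $n\ge0$ and maps $a_1,\ldots,a_n\in\{T_{\beta,0},\ldots,T_{\beta,m}\}$ with $(a_j\circ\cdots\circ a_1)(x)\in[0,\frac{m}{\beta-1}]$ for all $j\le n$, such that $(a_n\circ\cdots\circ a_1)(x)$ lies in the interior of the switch region $[\frac{1}{\beta},\frac{(m-1)\beta+1}{\beta(\beta-1)}]$.
   Context: $T_{\beta,i}(x)=\beta x-i$ for $i\in\{0,\ldots,m\}$. *)

(* Defs.v *)
From Stdlib Require Import Reals Lra Lia List.
Open Scope R_scope.

Definition T (beta : R) (i : nat) (x : R) : R := beta * x - INR i.

(* apply_maps beta [i1; ...; in] x = (T_{beta,in} o ... o T_{beta,i1})(x):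
   the first map in the list is applied first. *)
Fixpoint apply_maps (beta : R) (ds : list nat) (x : R) : R :=
  match ds with
  | nil => x
  | i :: ds' => apply_maps beta ds' (T beta i x)
  end.

(* Main.v *)
Require Import Defs.
From Stdlib Require Import Reals List.
From Stdlib Require Import Lra Lia Psatz.
Open Scope R_scope.

Definition good (m : nat) (beta x : R) (ds : list nat) : Prop :=
    (forall i, In i ds -> (i <= m)%nat) /\
    (forall j : nat, (j <= length ds)%nat ->
       0 <= apply_maps beta (firstn j ds) x <= INR m / (beta - 1)) /\
    1 / beta < apply_maps beta ds x < ((INR m - 1) * beta + 1) / (beta * (beta - 1)).

Lemma good_nil m beta x :
  0 <= x <= INR m / (beta - 1) ->
  1 / beta < x < ((INR m - 1) * beta + 1) / (beta * (beta - 1)) ->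
  good m beta x nil.
Proof.
  intros H1 H2. split; [|split].
  - intros i [].
  - intros j Hj. simpl in Hj. assert (j = 0%nat) by lia. subst. simpl. exact H1.
  - simpl. exact H2.
Qed.

Lemma good_cons m beta x i ds :
  (i <= m)%nat -> 0 <= x <= INR m / (beta - 1) ->
  good m beta (T beta i x) ds -> good m beta x (i :: ds).
Proof.
  intros Hi Hx [H1 [H2 H3]]. split; [|split].
  - intros k [<-|Hk]; auto.
  - intros [|j] Hj; simpl; auto. apply H2. simpl in Hj. lia.
  - simpl. exact H3.
Qed.

Section S.
Variables (m : nat) (b : R).
Hypothesis hb : 1 < b.
Hypothesis hq : b * b < INR m * b + 1.
Let M := INR m.
Let L := INR m / (b - 1).
Let U := ((INR m - 1) * b + 1) / (b * (b - 1)).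

Lemma LE : L * (b - 1) = M.
Proof. unfold L, M. field. lra. Qed.
Lemma UE : U * (b * (b - 1)) = (M - 1) * b + 1.
Proof. unfold U, M. field. lra. Qed.
Lemma IE : (1 / b) * b = 1.
Proof. field. lra. Qed.
Lemma M0 : 0 <= M.
Proof. apply pos_INR. Qed.

Lemma F1 : 1 < U.
Proof. pose proof UE. pose proof M0. assert (0 < b*(b-1)) by nra.
  destruct (Rle_dec U 1) as [h|h]; [|lra].
  assert (0 <= (1 - U) * (b*(b-1))) by (apply Rmult_le_pos; lra).
  unfold M in *. nra. Qed.
Lemma F2 : 1 <= L.
Proof. pose proof LE. pose proof M0. unfold M in *.
  assert (INR m >= b - 1) by nra.
  destruct (Rle_dec 1 L) as [h|h]; [lra|].
  assert (0 < (1 - L) * (b-1)) by (apply Rmult_lt_0_compat; lra). nra. Qed.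
Lemma F3 : 1 / b < 1.
Proof. pose proof IE. nra. Qed.
Lemma F5 : U < L.
Proof. pose proof UE. pose proof LE. pose proof M0. unfold M in *. assert (0 < b*(b-1)) by nra.
  assert (U * b * (b-1) < L * b * (b-1)) by nra. nra. Qed.
Lemma F4 x : U <= x -> 1 / b < b * x - M.
Proof. intros H. pose proof UE. pose proof IE. pose proof M0. unfold M in *.
  assert (0 < b*(b-1)) by nra.
  assert (E1 : b * (U*(b*(b-1))) = b*((INR m-1)*b+1)) by (rewrite H0; ring).
  assert (E2 : (1/b) * (b*(b-1)) = b - 1) by (field; lra).
  assert ((b*U - INR m) * (b*(b-1)) > (1/b) * (b*(b-1))) by (rewrite E2; nra).
  assert (b*U - INR m > 1/b).
  { apply Rmult_lt_reg_r with (b*(b-1)); lra. }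
  nra. Qed.

Lemma up0 n : forall x, 0 < x -> x <= 1 -> 1 / b < b ^ n * x ->
  exists ds, good m b x ds.
Proof.
  pose proof F1 as f1; pose proof F2 as f2; pose proof F3 as f3.
  fold L U in f1, f2 |- *.
  induction n as [|n IH]; intros x H0 H1 H2.
  - exists nil. apply good_nil; simpl in H2; fold L U; lra.
  - destruct (Rlt_le_dec (1/b) x) as [Hx|Hx].
    + exists nil. apply good_nil; fold L U; lra.
    + destruct (IH (T b 0 x)) as [ds Hds].
      * unfold T; simpl; nra.
      * unfold T; simpl. pose proof IE. nra.
      * unfold T; simpl. simpl in H2. lra.
      * exists (0%nat :: ds). apply good_cons; auto. lia. fold L; lra.
Qed.

Lemma downm n : forall x, 1 / b < x < L -> L - U < b ^ n * (L - x) ->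
  exists ds, good m b x ds.
Proof.
  pose proof F5 as f5; pose proof F3 as f3. pose proof F1 as f1.
  assert (0 < 1/b) by (apply Rdiv_lt_0_compat; lra).
  fold L U in f1, f5 |- *.
  induction n as [|n IH]; intros x H1 H2.
  - exists nil. apply good_nil; simpl in H2; fold L U; lra.
  - destruct (Rlt_le_dec x U) as [Hx|Hx].
    + exists nil. apply good_nil; fold L U; lra.
    + pose proof (F4 x Hx). pose proof LE. fold L in H0.
      assert (E : L - T b m x = b * (L - x)) by (unfold T; fold M; nra).
      destruct (IH (T b m x)) as [ds Hds].
      * split. unfold T; fold M; lra. nra.
      * rewrite E. simpl in H2. lra.
      * exists (m :: ds). apply good_cons; auto. fold L; lra.
Qed.
End S.

Theorem lemma2p4 (m : nat) (beta : R) :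
  1 < beta ->
  beta < (INR m + sqrt (INR m ^ 2 + 4)) / 2 ->
  forall x : R, 0 < x < INR m / (beta - 1) ->
  exists ds : list nat,
    (forall i, In i ds -> (i <= m)%nat) /\
    (forall j : nat, (j <= length ds)%nat ->
       0 <= apply_maps beta (firstn j ds) x <= INR m / (beta - 1)) /\
    1 / beta < apply_maps beta ds x < ((INR m - 1) * beta + 1) / (beta * (beta - 1)).
Proof.
  intros hb hs x Hx.
  pose proof (pos_INR m) as M0.
  assert (hq : beta * beta < INR m * beta + 1).
  { pose proof (sqrt_pos (INR m ^ 2 + 4)) as Sp.
    assert (Ss : sqrt (INR m ^ 2 + 4) * sqrt (INR m ^ 2 + 4) = INR m ^ 2 + 4)
      by (apply sqrt_sqrt; nra).
    destruct (Rle_dec (2*beta - INR m) 0); nra. }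
  pose proof (F1 m beta hb hq). pose proof (F3 beta hb). pose proof (F5 m beta hb).
  pose proof (F2 m beta hb hq).
  destruct (Rle_dec x (1/beta)) as [Hlo|Hlo].
  - destruct (Pow_x_infinity beta ltac:(rewrite Rabs_pos_eq; lra) (1/beta/x + 1)) as [N HN].
    specialize (HN N (le_n N)). rewrite Rabs_pos_eq in HN by (apply pow_le; lra).
    apply (up0 m beta hb hq N x); try lra.
    assert (1/beta/x * x = 1/beta) by (field; lra). nra.
  - destruct (Rlt_le_dec x (((INR m - 1) * beta + 1) / (beta * (beta - 1)))) as [Hmid|Hhi].
    + exists nil. apply good_nil; lra.
    + set (L := INR m / (beta - 1)) in *.
      set (U := ((INR m - 1) * beta + 1) / (beta * (beta - 1))) in *.
      destruct (Pow_x_infinity beta ltac:(rewrite Rabs_pos_eq; lra) ((L - U)/(L-x) + 1)) as [N HN].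
      specialize (HN N (le_n N)). rewrite Rabs_pos_eq in HN by (apply pow_le; lra).
      apply (downm m beta hb hq N x). fold L U. lra.
      assert ((L-U)/(L-x) * (L-x) = L-U) by (field; lra). fold L U. nra.
Qed.
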